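(* Let $(X,S)$ be an association scheme with the trivial partition $S=\{\mathbf{1},\sigma\}$, where $\mathbf{1}=\{(x,x)\mid x\in X\}$ and $\sigma=(X\times X)\setminus\mathbf{1}$. Then every self-homotopy equivalence of the quasi-schemoid $\jmath(X,S)$ is an isomorphism.
   Context: An association scheme is a pair $(X,S)$ with $X$ a finite set and $S$ a partition of $X\times X$ containing $1_X=\{(x,x)\mid x\in X\}$, closed under $g\mapsto g^*=\{(y,x)\mid(x,y)\in g\}$, such that for all $e,f,g\in S$ the number $\sharp\{y\in X\mid(x,y)\in e,(y,z)\in f\}$ is the same for all $(x,z)\in g$. The quasi-schemoid $\jmath(X,S)=(\mathcal{C},S)$ has $ob(\mathcal{C})=X$, $\mathrm{Hom}_{\mathcal{C}}(y,x)=\{(x,y)\}$, composition $(z,x)\circ(x,y)=(z,y)$, and partition $S$ of $mor(\mathcal{C})=X\times X$. A quasi-schemoid is a small category with a partition of its morphisms satisfying: for blocks $\sigma,\tau,\mu$ and $f,g\in\mu$ the number of composable pairs $(a,b)\in\sigma\times\tau$ with $a\circ b=f$ equals that with $a\circ b=g$. A morphism of quasi-schemoids is a functor sending each block of the source partition into some block of the target partition. Product: $(\mathcal{C},S)\times(\mathcal{E},S')=(\mathcal{C}\times\mathcal{E},\{\sigma\times\tau\})$. $[1]$ has objects $0,1$ and one non-identity morphism $0\to1$; $I=([1],\{\{f\}\}_{f})$. A homotopy $H\colon F\Rightarrow G$ is a morphism $H\colon(\mathcal{C},S)\times I\to(\mathcal{D},S')$ with $H\circ\varepsilon_0=F$,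 $H\circ\varepsilon_1=G$ ($\varepsilon_i(a)=(a,i)$, $\varepsilon_i(f)=(f,1_i)$). $F\sim G$ if there is a homotopy $F\Rightarrow G$ or $G\Rightarrow F$; $F\simeq G$ if there is a finite chain $F=F_0\sim\cdots\sim F_n=G$. A self-homotopy equivalence of $A$ is a morphism $F\colon A\to A$ for which there exists $G\colon A\to A$ with $FG\simeq1$ and $GF\simeq1$. *)

(* Defs.v *)
From mathcomp Require Import all_boot.
From Stdlib Require Import Relations.

Set Implicit Arguments.
Unset Strict Implicit.
Unset Printing Implicit Defensive.

(* A small category presented by its set of morphisms (with domain,
   codomain, identities and a total composition which is only meaningful
   on composable pairs), together with a partition of its morphisms,
   encoded by the equivalence relation "lie in the same block". *)
Record qschemoid := QS {
  ob : Type;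
  mor : Type;
  dom : mor -> ob;
  cod : mor -> ob;
  idm : ob -> mor;
  comp : mor -> mor -> mor;          (* comp g f = g \o f when dom g = cod f *)
  sameblk : mor -> mor -> Prop
}.

Record qmap (A B : qschemoid) := QMap {
  fo : ob A -> ob B;
  fm : mor A -> mor B
}.

Definition is_qmorphism (A B : qschemoid) (F : qmap A B) : Prop :=
  [/\ (forall f, dom (fm F f) = fo F (dom f)),
      (forall f, cod (fm F f) = fo F (cod f)),
      (forall a, fm F (idm a) = idm (fo F a)),
      (forall f g, dom g = cod f ->
          fm F (comp g f) = comp (fm F g) (fm F f))
    & (forall f g, sameblk f g -> sameblk (fm F f) (fm F g))].

Definition qeq (A B : qschemoid) (F G : qmap A B) : Prop :=
  (forall a, fo F a = fo G a) /\ (forall f, fm F f = fm G f).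

Definition qid (A : qschemoid) : qmap A A := QMap (A:=A) (B:=A) id id.

Definition qcomp (A B C : qschemoid) (G : qmap B C) (F : qmap A B) : qmap A C :=
  QMap (fun a => fo G (fo F a)) (fun f => fm G (fm F f)).

(* The quasi-schemoid j(X,S) for the association scheme (X,S) with the
   trivial partition S = {1, sigma}: objects X, Hom(y,x) = {(x,y)},
   (z,x) \o (x,y) = (z,y); two morphisms are in the same block iff both
   are identities or both are non-identities. *)
Definition jtriv (X : finType) : qschemoid :=
  @QS X (X * X) (fun p => p.2) (fun p => p.1) (fun x => (x, x))
      (fun q p => (q.1, p.2))
      (fun p q => (p.1 == p.2) = (q.1 == q.2)).

(* The category [1] : objects false (= 0) and true (= 1), and a unique
   non-identity morphism 0 -> 1; I has the discrete partition. *)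
Inductive Imor := Iid of bool | Iarr.

Definition Idom (f : Imor) : bool := match f with Iid b => b | Iarr => false end.
Definition Icod (f : Imor) : bool := match f with Iid b => b | Iarr => true end.
Definition Icomp (g f : Imor) : Imor :=
  match g, f with
  | Iid _, _ => f
  | _, Iid _ => g
  | Iarr, Iarr => Iarr (* not composable; irrelevant *)
  end.

Definition Iqs : qschemoid :=
  @QS bool Imor Idom Icod Iid Icomp (fun f g => f = g).

Definition qprod (A B : qschemoid) : qschemoid :=
  @QS (ob A * ob B) (mor A * mor B)
      (fun f => (dom f.1, dom f.2))
      (fun f => (cod f.1, cod f.2))
      (fun a => (idm a.1, idm a.2))
      (fun g f => (comp g.1 f.1, comp g.2 f.2))
      (fun f g => sameblk f.1 g.1 /\ sameblk f.2 g.2).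

Definition qeps (A : qschemoid) (i : bool) : qmap A (qprod A Iqs) :=
  QMap (A:=A) (B:=qprod A Iqs) (fun a => (a, i)) (fun f => (f, Iid i)).

Definition homotopy (A B : qschemoid) (H : qmap (qprod A Iqs) B)
    (F G : qmap A B) : Prop :=
  [/\ is_qmorphism H, qeq (qcomp H (qeps A false)) F
    & qeq (qcomp H (qeps A true)) G].

Definition qsim (A B : qschemoid) (F G : qmap A B) : Prop :=
  (exists H, homotopy H F G) \/ (exists H, homotopy H G F).

Definition qhtpc (A B : qschemoid) : relation (qmap A B) :=
  clos_refl_trans (qmap A B) (@qsim A B).

Definition self_htpy_equiv (A : qschemoid) (F : qmap A A) : Prop :=
  is_qmorphism F /\
  exists G : qmap A A, [/\ is_qmorphism G,
     qhtpc (qcomp F G) (qid A) & qhtpc (qcomp G F) (qid A)].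

Definition is_qiso (A B : qschemoid) (F : qmap A B) : Prop :=
  is_qmorphism F /\
  exists G : qmap B A, [/\ is_qmorphism G,
     qeq (qcomp F G) (qid B) & qeq (qcomp G F) (qid A)].

(* Main.v *)
Require Import Defs.
From mathcomp Require Import all_boot.

Lemma fm_form (X : finType) (A : qschemoid) (F : qmap A (jtriv X)) :
  is_qmorphism F -> forall f, fm F f = (fo F (cod f), fo F (dom f)).
Proof. case=> hd hc _ _ _ f. rewrite -hd -hc. by case: (fm F f). Qed.

Lemma key (X : finType) (k l : X -> X) :
  (forall x y, (l x == k x) = (l y == k y)) ->
  (forall x y u v, x != y -> u != v -> (l x == l y) = (l u == l v)) ->
  injective k -> injective l.
Proof.
move=> H1 H2 ik a b eab.
have [->|nab] := eqVneq a b; first by [].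
have lc : forall u, l u = l a.
  move=> u; have [->|nua] := eqVneq u a; first by [].
  by apply/eqP; rewrite (H2 u a a b) // eab.
have [g _ kg] := injF_bij ik.
have eq1 : l (g (l a)) = k (g (l a)) by rewrite kg lc.
have all_eq : forall x, l x = k x.
  move=> x; apply/eqP; rewrite (H1 x (g (l a))); exact/eqP.
by apply: ik; rewrite -!all_eq.
Qed.

Lemma htpy_inj (X : finType) (H : qmap (qprod (jtriv X) Iqs) (jtriv X))
  (K L : qmap (jtriv X) (jtriv X)) :
  homotopy H K L -> (injective (fo K) <-> injective (fo L)).
Proof.
case=> hm [hK _] [hL _].
have ek : forall x, fo K x = fo H (x, false) by move=> x; rewrite -hK.
have el : forall x, fo L x = fo H (x, true) by move=> x; rewrite -hL.
have fmH := @fm_form X _ H hm.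
case: hm => _ _ _ _ hb.
have h1 : forall x y, (fo L x == fo K x) = (fo L y == fo K y).
  move=> x y; have := hb ((x,x),Iarr) ((y,y),Iarr).
  rewrite !fmH /= !ek !el; apply; split=> //=; by rewrite !eqxx.
have h2K : forall x y u v, x != y -> u != v ->
    (fo K x == fo K y) = (fo K u == fo K v).
  move=> x y u v nxy nuv; have := hb ((x,y),Iid false) ((u,v),Iid false).
  rewrite !fmH /= !ek; apply; split=> //=; by rewrite (negbTE nxy) (negbTE nuv).
have h2L : forall x y u v, x != y -> u != v ->
    (fo L x == fo L y) = (fo L u == fo L v).
  move=> x y u v nxy nuv; have := hb ((x,y),Iid true) ((u,v),Iid true).
  rewrite !fmH /= !el; apply; split=> //=; by rewrite (negbTE nxy) (negbTE nuv).
split; apply: key => //.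
move=> x y; by rewrite eq_sym (h1 x y) eq_sym.
Qed.

Lemma chain_inj (X : finType) (K L : qmap (jtriv X) (jtriv X)) :
  qhtpc K L -> (injective (fo K) <-> injective (fo L)).
Proof.
elim=> [K' L' [[H hH]|[H hH]]|K'|K' L' M _ IH1 _ IH2].
- exact: htpy_inj hH.
- by apply: iff_sym; exact: htpy_inj hH.
- by [].
- exact: iff_trans IH1 IH2.
Qed.

Theorem lemma4p1 (X : finType) (F : qmap (jtriv X) (jtriv X)) :
  self_htpy_equiv F -> is_qiso F.
Proof.
case=> Fm [G [Gm _ c2]].
have iGF : injective (fun x => fo G (fo F x)).
  have := proj2 (@chain_inj X _ _ c2); apply => x y /= //.
have iF : injective (fo F) := inj_compr iGF.
have fmF := @fm_form X _ F Fm.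
split=> //.
exists (@QMap (jtriv X) (jtriv X) (fun x => invF iF x)
          (fun p => (invF iF p.1, invF iF p.2))).
have ie : forall a b, (invF iF a == invF iF b) = (a == b).
  move=> a b; apply: inj_eq; exact: can_inj (f_invF iF).
split.
- split=> //= [[a b] [c d]] /=; by rewrite !ie.
- split=> [a|[a b]] /=; first exact: f_invF.
  by rewrite fmF /= !f_invF.
- split=> [a|[a b]] /=; first exact: invF_f.
  by rewrite fmF /= !invF_f.
Qed.
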